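(* Let $ER_{min}\le ER_{max}$ be fixed memory addresses and $ER=[ER_{min},ER_{max}]$. For every execution trace (in the sense described in the context), if the trace satisfies the hardware-model formulas (HM1)–(HM6) together with $$\text{(L10)}\quad \mathbf{G}\{\neg reset \land (PC\in ER)\land \neg\mathbf{X}(PC\in ER)\rightarrow (PC=ER_{max})\lor \mathbf{X}(reset)\},$$ $$\text{(L11)}\quad \mathbf{G}\{\neg reset \land \neg(PC\in ER)\land \mathbf{X}(PC\in ER)\rightarrow \mathbf{X}(PC=ER_{min})\lor \mathbf{X}(reset)\},$$ $$\text{(L12)}\quad \mathbf{G}\{(PC\in ER)\land (irq\lor DMA_{en})\rightarrow reset\},$$ then it satisfies $$\mathbf{G}\{(PC\in ER)\rightarrow [(PC\in ER)\land\neg irq\land\neg DMA_{en}]\ \mathbf{W}\ [(PC=ER_{max})\lor reset]\}\ \land\ \mathbf{G}\{\neg reset\land\neg(PC\in ER)\land \mathbf{X}(PC\in ER)\rightarrow \mathbf{X}(PC=ER_{min})\lor\mathbf{X}(reset)\}.$$ That is, the conjunction of (HM1)–(HM6), (L10), (L11), (L12) implies the last formula in Linear Temporal Logic.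
   Context: Model of a low-end microcontroller (MCU): execution is a discrete sequence of MCU states (one per clock cycle), and the following signals are observed at each state: the program counter $PC$ (an address); $R_{en}$ and $W_{en}$ (1-bit CPU memory read/write enable); $D_{addr}$ (address of the CPU memory access); $DMA_{en}$ (1-bit, DMA active) and $DMA_{addr}$ (address accessed by DMA); $irq$ (1-bit, an interrupt is happening); $reset$ (1-bit, MCU reset). For a contiguous memory region $M=[M_{min},M_{max}]$, ''$a\in M$'' means $M_{min}\le a\le M_{max}$. Execution is also modeled by a relation ${\bf X}(s)\leftarrow EXEC(s,i)$ (''the next state is produced by executing instruction $i$ in the current state $s$'') and by state-property sets $READ_M, WRITE_M, DMA^R_M, DMA^W_M, IRQ, RESET$ (states produced by a CPU read from $M$, a CPU write to $M$, a DMA read/write of $M$, states where an interrupt / a reset is triggered). LTL operators over infinite traces: $\mathbf{X}\phi$ ($\phi$ holds at the next state), $\mathbf{G}\phi$ ($\phi$ holds at all current and future states), $\phi\,\mathbf{U}\,\psi$ ($\psi$ holds at some current/future state and $\phi$ holds at all states before it), $\phi\,\mathbf{W}\,\psi\equiv(\phi\,\mathbf{U}\,\psi)\lor\mathbf{G}\phi$, $\phi\,\mathbf{B}\,\psi\equiv\neg(\neg\phi\,\mathbf{U}\,\psi)$. Hardware model formulas (HM1)–(HM6), assumed for every contiguous region $M$: (HM1) $\mathbf{G}\{[\mathbf{X}(s)\leftarrow EXEC(s,i_k)\land i_k\in M]\rightarrow (PC\in M)\}$; (HM2) $\mathbf{G}\{\mathbf{X}(s)\in READ_M\rightarrow (R_{en}\land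 D_{addr}\in M)\}$; (HM3) $\mathbf{G}\{\mathbf{X}(s)\in WRITE_M\rightarrow (W_{en}\land D_{addr}\in M)\}$; (HM4) $\mathbf{G}\{(\mathbf{X}(s)\in DMA^R_M\lor \mathbf{X}(s)\in DMA^W_M)\rightarrow (DMA_{en}\land DMA_{addr}\in M)\}$; (HM5) $\mathbf{G}\{s\in IRQ\leftrightarrow irq\}$; (HM6) $\mathbf{G}\{s\in RESET\leftrightarrow reset\}$. *)

(* Defs.v *)
From Stdlib Require Import Arith.

Record signals : Type := mkSignals {
  PC : nat; R_en : bool; W_en : bool; D_addr : nat;
  DMA_en : bool; DMA_addr : nat; irq : bool; reset : bool }.

Definition region : Type := (nat * nat)%type.
Definition in_region (a : nat) (M : region) : Prop := fst M <= a <= snd M.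

(* LTL over the positions of a fixed infinite trace: a formula is the set of
   positions (suffix start indices) at which it holds. *)
Definition ltl := nat -> Prop.
Definition Gl (p : ltl) : ltl := fun i => forall j, i <= j -> p j.
Definition Xl (p : ltl) : ltl := fun i => p (S i).
Definition Ul (p q : ltl) : ltl :=
  fun i => exists k, i <= k /\ q k /\ forall j, i <= j -> j < k -> p j.
Definition Wl (p q : ltl) : ltl := fun i => Ul p q i \/ Gl p i.
Definition Bl (p q : ltl) : ltl := fun i => ~ Ul (fun j => ~ p j) q i.
Definition Andl (p q : ltl) : ltl := fun i => p i /\ q i.
Definition Orl (p q : ltl) : ltl := fun i => p i \/ q i.
Definition Impl (p q : ltl) : ltl := fun i => p i -> q i.
Definition Notl (p : ltl) : ltl := fun i => ~ p i.

Section Model.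
Variables (St Instr : Type).
Variable sig : St -> signals.
Variable instr_addr : Instr -> nat.
Variable EXEC : St -> Instr -> St -> Prop.
Variables READ WRITE DMA_R DMA_W : region -> St -> Prop.
Variables IRQ RESET : St -> Prop.
Variable tr : nat -> St.

Definition a_pc_in (M : region) : ltl := fun i => in_region (PC (sig (tr i))) M.
Definition a_pc_eq (a : nat) : ltl := fun i => PC (sig (tr i)) = a.
Definition a_irq : ltl := fun i => irq (sig (tr i)) = true.
Definition a_dma : ltl := fun i => DMA_en (sig (tr i)) = true.
Definition a_reset : ltl := fun i => reset (sig (tr i)) = true.

Definition HM1 : ltl := Gl (fun i => forall (M : region) (ik : Instr),
  EXEC (tr i) ik (tr (S i)) /\ in_region (instr_addr ik) M -> a_pc_in M i).
Definition HM2 : ltl := Gl (fun i => forall M : region,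
  READ M (tr (S i)) -> R_en (sig (tr i)) = true /\ in_region (D_addr (sig (tr i))) M).
Definition HM3 : ltl := Gl (fun i => forall M : region,
  WRITE M (tr (S i)) -> W_en (sig (tr i)) = true /\ in_region (D_addr (sig (tr i))) M).
Definition HM4 : ltl := Gl (fun i => forall M : region,
  DMA_R M (tr (S i)) \/ DMA_W M (tr (S i)) ->
  DMA_en (sig (tr i)) = true /\ in_region (DMA_addr (sig (tr i))) M).
Definition HM5 : ltl := Gl (fun i => IRQ (tr i) <-> a_irq i).
Definition HM6 : ltl := Gl (fun i => RESET (tr i) <-> a_reset i).

Variables ER_min ER_max : nat.
Definition ER : region := (ER_min, ER_max).

Definition L10 : ltl := Gl (Impl
  (Andl (Andl (Notl a_reset) (a_pc_in ER)) (Notl (Xl (a_pc_in ER))))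
  (Orl (a_pc_eq ER_max) (Xl a_reset))).
Definition L11 : ltl := Gl (Impl
  (Andl (Andl (Notl a_reset) (Notl (a_pc_in ER))) (Xl (a_pc_in ER)))
  (Orl (Xl (a_pc_eq ER_min)) (Xl a_reset))).
Definition L12 : ltl := Gl (Impl
  (Andl (a_pc_in ER) (Orl a_irq a_dma)) a_reset).

Definition goal_formula : ltl := Andl
  (Gl (Impl (a_pc_in ER)
      (Wl (Andl (Andl (a_pc_in ER) (Notl a_irq)) (Notl a_dma))
          (Orl (a_pc_eq ER_max) a_reset))))
  (Gl (Impl
      (Andl (Andl (Notl a_reset) (Notl (a_pc_in ER))) (Xl (a_pc_in ER)))
      (Orl (Xl (a_pc_eq ER_min)) (Xl a_reset)))).
End Model.

(* Main.v *)
Require Import Defs.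
From Stdlib Require Import Arith Lia Classical.

Lemma min_nat (Q : nat -> Prop) : forall n, Q n -> exists k, Q k /\ forall m, m < k -> ~ Q m.
Proof.
  intro n; induction n as [n IH] using lt_wf_ind; intro Hn.
  destruct (classic (exists m, m < n /\ Q m)) as [[m [Hm Qm]]|H].
  - exact (IH m Hm Qm).
  - exists n; split; auto. intros m Hm Qm; apply H; eauto.
Qed.

Theorem theorem1 (St Instr : Type) (sig : St -> signals) (instr_addr : Instr -> nat)
  (EXEC : St -> Instr -> St -> Prop) (READ WRITE DMA_R DMA_W : region -> St -> Prop)
  (IRQ RESET : St -> Prop) (ER_min ER_max : nat) (tr : nat -> St) :
  ER_min <= ER_max ->
  HM1 St Instr sig instr_addr EXEC tr 0 ->
  HM2 St sig READ tr 0 ->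
  HM3 St sig WRITE tr 0 ->
  HM4 St sig DMA_R DMA_W tr 0 ->
  HM5 St sig IRQ tr 0 ->
  HM6 St sig RESET tr 0 ->
  L10 St sig tr ER_min ER_max 0 ->
  L11 St sig tr ER_min ER_max 0 ->
  L12 St sig tr ER_min ER_max 0 ->
  goal_formula St sig tr ER_min ER_max 0.
Proof.
  intros _ _ _ _ _ _ _ H10 H11 H12.
  split; [|exact H11].
  intros i _ Hi.
  set (Q := fun j => PC (sig (tr j)) = ER_max \/ reset (sig (tr j)) = true).
  assert (Inv : forall d, (forall m, i <= m <= i + d -> ~ Q m) -> a_pc_in St sig tr (ER ER_min ER_max) (i + d)).
  { induction d as [|d IH]; intro Hq.
    - rewrite Nat.add_0_r; exact Hi.
    - assert (E : a_pc_in St sig tr (ER ER_min ER_max) (i + d)) by (apply IH; intros m Hm; apply Hq; lia).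
      destruct (classic (a_pc_in St sig tr (ER ER_min ER_max) (i + S d))) as [Hin|Hout]; [exact Hin|].
      exfalso.
      assert (Qd := Hq (i+d) ltac:(lia)). assert (QSd := Hq (i + S d) ltac:(lia)).
      unfold Q in Qd, QSd.
      destruct (H10 (i+d) ltac:(lia)) as [Hm|Hr].
      + split; [split|].
        * intro R; apply Qd; right; exact R.
        * exact E.
        * unfold Notl, Xl. replace (S (i+d)) with (i + S d) by lia. exact Hout.
      + apply Qd; left; exact Hm.
      + apply QSd; right. unfold Xl, a_reset in Hr. replace (i + S d) with (S (i+d)) by lia. exact Hr. }
  assert (P : forall j, i <= j -> (forall m, i <= m <= j -> ~ Q m) ->
     Andl (Andl (a_pc_in St sig tr (ER ER_min ER_max)) (Notl (a_irq St sig tr))) (Notl (a_dma St sig tr)) j).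
  { intros j Hj Hq.
    assert (E : a_pc_in St sig tr (ER ER_min ER_max) j).
    { replace j with (i + (j - i)) by lia. apply Inv. intros m Hm; apply Hq; lia. }
    assert (NR : ~ a_reset St sig tr j) by (intro R; apply (Hq j ltac:(lia)); right; exact R).
    split; [split|]; [exact E| |].
    - intro Iq; apply NR; apply (H12 j ltac:(lia)); split; [exact E| left; exact Iq].
    - intro Dq; apply NR; apply (H12 j ltac:(lia)); split; [exact E| right; exact Dq]. }
  destruct (classic (exists k, i <= k /\ Q k)) as [[k [Hk Qk]]|Hn].
  - destruct (min_nat (fun k => i <= k /\ Q k) k (conj Hk Qk)) as [k0 [[Hk0 Qk0] Hmin]].
    left. exists k0. split; [exact Hk0|]. split; [exact Qk0|].
    intros j Hj Hjk. apply P; [exact Hj|]. intros m Hm Qm. apply (Hmin m ltac:(lia)); split; [lia|exact Qm].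
  - right. intros j Hj. apply P; [exact Hj|]. intros m Hm Qm. apply Hn; exists m; split; [lia|exact Qm].
Qed.
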